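(* Let $(\mathcal{C},\Delta,\epsilon)$ be a finite-dimensional coalgebra over $\mathbb{C}$, let $V_1,V_2,\dots$ be finite-dimensional complex vector spaces and $\phi_i:\mathcal{C}\to V_i$ ($i=1,2,\dots$) linear maps. Let $W$ be a finite-dimensional complex vector space and $\psi:\mathcal{C}^*\to\mathrm{End}(W)$ an injective representation of the algebra $\mathcal{C}^*$. Let $B$ be a basis of $\mathcal{C}$ with dual basis $\{\delta_x\}_{x\in B}$ of $\mathcal{C}^*$, and define $A_i=\sum_{x\in B}\phi_i(x)\otimes\psi(\delta_x)\in V_i\otimes\mathrm{End}(W)$. Then for every $x\in\mathcal{C}$ there exists a matrix $b(x)\in\mathrm{End}(W)$ such that for all $n\geq 1$, $$(\phi_1\otimes\cdots\otimes\phi_n)\circ\Delta^{n-1}(x)=\sum_{y_1,\dots,y_n\in B}\mathrm{Tr}\big(b(x)\,\psi(\delta_{y_1})\psi(\delta_{y_2})\cdots\psi(\delta_{y_n})\big)\,\phi_1(y_1)\otimes\cdots\otimes\phi_n(y_n),$$ i.e. $(\phi_1\otimes\cdots\otimes\phi_n)\circ\Delta^{n-1}(x)$ is the matrix product state with tensors $A_1,\dots,A_n$ and boundary matrix $b(x)$.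
   Context: A coalgebra is a vector space $\mathcal{C}$ with a coassociative linear map $\Delta:\mathcal{C}\to\mathcal{C}\otimes\mathcal{C}$, $(\Delta\otimes\mathrm{Id})\Delta=(\mathrm{Id}\otimes\Delta)\Delta$, and a counit $\epsilon\in\mathcal{C}^*$ with $(\epsilon\otimes\mathrm{Id})\Delta=(\mathrm{Id}\otimes\epsilon)\Delta=\mathrm{Id}$. $\Delta^{n-1}$ denotes the $(n-1)$-fold iterated coproduct $\mathcal{C}\to\mathcal{C}^{\otimes n}$ ($\Delta^0=\mathrm{Id}$). The dual $\mathcal{C}^*$ is an algebra with product $(fg)(x)=(f\otimes g)(\Delta(x))$ and unit $\epsilon$. *)

(* Defs.v *)
(* Coordinates: the base field is the complex numbers
   R[i] = complex R for an arbitrary R : realType (a model of the reals). *)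
From HB Require Import structures.
From mathcomp Require Import all_boot all_order all_algebra.
From mathcomp Require Import complex.
From mathcomp Require Import reals.
Set Implicit Arguments. Unset Strict Implicit. Unset Printing Implicit Defensive.
Import Order.TTheory GRing.Theory Num.Theory.
Local Open Scope ring_scope.

Section Coalg.
Variables (K : fieldType) (d : nat).

(* A d-dimensional coalgebra C = K^d (elements are row vectors 'rV_d, the
   standard basis vectors are e_k = delta_mx 0 k).  The coproduct is given by
   its structure constants:  Delta e_k = \sum_(i,j) D k i j  e_i (x) e_j,
   and the counit by eps : 'cV_d with  eps(e_k) = eps k 0. *)

Definition coassociative (D : 'I_d -> 'I_d -> 'I_d -> K) : Prop :=
  forall k a b c,
    \sum_(i < d) D k i c * D i a b = \sum_(j < d) D k a j * D j b c.

Definition counital (D : 'I_d -> 'I_d -> 'I_d -> K) (eps : 'cV[K]_d) : Prop :=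
  (forall k j, \sum_(i < d) eps i 0 * D k i j = (k == j)%:R) /\
  (forall k i, \sum_(j < d) eps j 0 * D k i j = (k == i)%:R).

(* Linear functionals f in C^* are column vectors, f(x) = (x *m f) 0 0.
   Convolution product in C^*: (fg)(x) = (f (x) g)(Delta x). *)
Definition dual_mul (D : 'I_d -> 'I_d -> 'I_d -> K) (f g : 'cV[K]_d) : 'cV[K]_d :=
  \col_k (\sum_(i < d) \sum_(j < d) D k i j * f i 0 * g j 0).

(* Coefficient of e_(s_1) (x) ... (x) e_(s_n) in Delta^(n-1)(e_k),
   with Delta^0 = Id and Delta^(n-1) = (Id (x) Delta^(n-2)) Delta. *)
Fixpoint iter_coprod_coef (D : 'I_d -> 'I_d -> 'I_d -> K) (k : 'I_d)
  (s : seq 'I_d) : K :=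
  match s with
  | [::] => 0
  | i :: s' =>
      if s' is [::] then (k == i)%:R
      else \sum_(j < d) D k i j * iter_coprod_coef D j s'
  end.

End Coalg.

Definition mxprod (K : fieldType) (w : nat) (s : seq 'M[K]_w) : 'M[K]_w :=
  foldr (fun A B => A *m B) 1%:M s.

(* Main.v *)
Require Import Defs.
From HB Require Import structures.
From mathcomp Require Import all_boot all_order all_algebra.
From mathcomp Require Import complex.
From mathcomp Require Import reals.
Import Order.TTheory GRing.Theory Num.Theory.
Local Open Scope ring_scope.
Set Implicit Arguments. Unset Strict Implicit. Unset Printing Implicit Defensive.
Lemma sum_tuple0 (V : nmodType) (T : finType) (G : 0.-tuple T -> V) :
  \sum_(s : 0.-tuple T) G s = G [tuple].
Proof.
rewrite (big_pred1 [tuple]) // => s; by rewrite [s]tuple0 /= eq_refl.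
Qed.

Lemma sum_tupleS (V : nmodType) (T : finType) n (G : n.+1.-tuple T -> V) :
  \sum_(s : n.+1.-tuple T) G s = \sum_(j : T) \sum_(s : n.-tuple T) G [tuple of j :: s].
Proof.
rewrite pair_big /=.
rewrite (reindex (fun p : T * n.-tuple T => [tuple of p.1 :: p.2])) //=.
exists (fun s : n.+1.-tuple T => (thead s, [tuple of behead s])) => [[j s] _|s _] /=.
  by rewrite theadE; congr pair; apply: val_inj.
case: s => [[|x s] //= Hs]; apply: val_inj => //.
Qed.

Lemma sum_prod_tuple (Rg : comSemiRingType) (T : finType) n (F : 'I_n -> T -> Rg) :
  \sum_(y : n.-tuple T) \prod_(t < n) F t (tnth y t) = \prod_(t < n) \sum_(j : T) F t j.
Proof.
elim: n F => [|n IH] F.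
  by rewrite sum_tuple0 !big_ord0.
rewrite sum_tupleS big_ord_recl big_distrl /=; apply: eq_bigr => j _.
rewrite -IH big_distrr /=; apply: eq_bigr => s _.
rewrite big_ord_recl; congr (_ * _); apply: eq_bigr => t _.
by rewrite tnthS.
Qed.
Lemma iter_cons (K : fieldType) d (D : 'I_d -> 'I_d -> 'I_d -> K) n k i
  (s : n.+1.-tuple 'I_d) :
  iter_coprod_coef D k (i :: s) = \sum_j D k i j * iter_coprod_coef D j s.
Proof. by case/tupleP: s. Qed.

Lemma coef_fold (K : fieldType) d (D : 'I_d -> 'I_d -> 'I_d -> K) eps
  (counitD : counital D eps) n (y : n.+1.-tuple 'cV[K]_d) k :
  (foldr (dual_mul D) eps y) k 0 =
  \sum_(s : n.+1.-tuple 'I_d) iter_coprod_coef D k s *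
     \prod_(t < n.+1) (tnth y t) (tnth s t) 0.
Proof.
elim: n y k => [|n IH] y k.
  case: y => [[|f [|? ?]] //= Hy].
  rewrite sum_tupleS /= mxE.
  under [RHS]eq_bigr => j _ do rewrite sum_tuple0 /= big_ord1 /=.
  rewrite [RHS](bigD1 k) //= eqxx mul1r [X in _ + X]big1 ?addr0; last first.
    by move=> j Hj; rewrite eq_sym (negbTE Hj) mul0r.
  under eq_bigr => i _ do under eq_bigr => j _ do rewrite mulrAC [D k i j * _]mulrC.
  under eq_bigr => i _ do rewrite -big_distrl /= (proj2 counitD k i).
  rewrite (bigD1 k) //= eqxx mul1r [X in _ + X]big1 ?addr0 //.
  by move=> j Hj; rewrite eq_sym (negbTE Hj) mul0r.
case/tupleP: y => f yt.
rewrite /= mxE sum_tupleS.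
apply: eq_bigr => i _.
under eq_bigr => j _ do rewrite IH -mulrA big_distrr /=.
under eq_bigr => j _ do rewrite big_distrr /=.
rewrite exchange_big; apply: eq_bigr => s _.
rewrite (iter_cons D k i s) big_distrl; apply: eq_bigr => j _ /=.
rewrite [in RHS]big_ord_recl.
under [in RHS]eq_bigr => t _ do rewrite !tnthS.
rewrite (_ : tnth [tuple of f :: yt] ord0 = f) // (_ : tnth [tuple of i :: s] ord0 = i) //.
by rewrite !mulrA; congr (_ * _); rewrite mulrAC.
Qed.
Lemma exists_b (K : fieldType) d w (psi : 'cV[K]_d -> 'M[K]_w)
  (psi_lin : forall (a : K) (f g : 'cV[K]_d), psi (a *: f + g) = a *: psi f + psi g)
  (psi_inj : injective psi) (x : 'rV[K]_d) :
  exists b : 'M[K]_w, forall f, \tr (b *m psi f) = (x *m f) 0 0.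
Proof.
have psi0 : psi 0 = 0.
  by have := psi_lin (-1) 0 0; rewrite scaler0 addr0 scaleN1r addNr.
have psiZ a f : psi (a *: f) = a *: psi f.
  by have := psi_lin a f 0; rewrite !addr0 psi0 addr0.
have psiD f g : psi (f + g) = psi f + psi g.
  by have := psi_lin 1 f g; rewrite !scale1r.
pose Psi : 'M[K]_(d, w * w) := \matrix_(k < d) mxvec (psi (delta_mx k 0)).
have HPsi f : mxvec (psi f) = f^T *m Psi.
  rewrite mulmx_sum_row {1}(matrix_sum_delta f).
  rewrite (big_morph psi psiD psi0) linear_sum; apply: eq_bigr => k _.
  rewrite big_ord1 psiZ linearZ /= rowK mxE; congr (_ *: _).
have : row_free Psi.
  apply: inj_row_free => u Hu.
  have : psi u^T = psi 0 by rewrite psi0 -(mxvecK (psi _)) HPsi trmxK Hu linear0.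
  by move/psi_inj => /(congr1 trmx); rewrite trmxK trmx0.
case/row_freeP => Q HQ.
pose L (M : 'M[K]_w) := (mxvec M *m (Q *m x^T)) 0 0.
exists (\matrix_(i, j) L (delta_mx j i)) => f.
have -> : (x *m f) 0 0 = L (psi f).
  rewrite /L HPsi !mulmxA -(mulmxA _ Psi) HQ mulmx1 -trmx_mul.
  by rewrite !mxE.
rewrite /mxtrace /L [in RHS](matrix_sum_delta (psi f)) linear_sum /= mulmx_suml summxE.
under eq_bigr => i _ do rewrite mxE.
rewrite exchange_big; apply: eq_bigr => i _.
rewrite linear_sum /= mulmx_suml summxE; apply: eq_bigr => j _.
rewrite !mxE linearZ /= mulrC big_distrr; apply: eq_bigr => k _; rewrite [in RHS]mxE /=; exact: mulrA.
Qed.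

Lemma coef_fold_map (K : fieldType) d (D : 'I_d -> 'I_d -> 'I_d -> K) eps
  (counitD : counital D eps) n (T : Type) (g : T -> 'cV[K]_d) (y : n.+1.-tuple T) k :
  (foldr (dual_mul D) eps (map g y)) k 0 =
  \sum_(s : n.+1.-tuple 'I_d) iter_coprod_coef D k s *
     \prod_(t < n.+1) g (tnth y t) (tnth s t) 0.
Proof.
rewrite (coef_fold counitD [tuple of map g y]); apply: eq_bigr => s _.
by congr (_ * _); apply: eq_bigr => t _; rewrite tnth_map.
Qed.
Theorem theorem3p3
  (R : realType) (d : nat)
  (* the coalgebra C = C^d : coproduct structure constants and counit *)
  (D : 'I_d -> 'I_d -> 'I_d -> R[i]) (eps : 'cV[R[i]]_d)
  (coassD : coassociative D) (counitD : counital D eps)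
  (* V_1, V_2, ... (indexed from 0) of dimensions m i, and phi_i : C -> V_i
     as matrices acting on row vectors: phi_i(x) = x *m phi i *)
  (m : nat -> nat) (phi : forall i : nat, 'M[R[i]]_(d, m i))
  (* W = C^w and psi : C^* -> End(W) an injective algebra representation *)
  (w : nat) (psi : 'cV[R[i]]_d -> 'M[R[i]]_w)
  (psi_lin : forall (a : R[i]) (f g : 'cV[R[i]]_d), psi (a *: f + g) = a *: psi f + psi g)
  (psi_mul : forall f g : 'cV[R[i]]_d, psi (dual_mul D f g) = psi f *m psi g)
  (psi_unit : psi eps = 1%:M)
  (psi_inj : injective psi)
  (* a basis B of C: the rows of an invertible matrix P (the basis vector
     y_j is row j P); its dual basis delta_j is col j (invmx P) *)
  (P : 'M[R[i]]_d) (P_unit : P \in unitmx) :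
  forall x : 'rV[R[i]]_d,
  exists b : 'M[R[i]]_w,
  forall n : nat, (1 <= n)%N ->
  forall a : (forall t : 'I_n, 'I_(m t)),
    (* component a of (phi_1 (x) ... (x) phi_n)(Delta^(n-1) x) *)
    \sum_(k < d) x 0 k *
      \sum_(s : n.-tuple 'I_d)
        iter_coprod_coef D k s * \prod_(t < n) phi t (tnth s t) (a t)
  =
    (* component a of the MPS sum over y_1..y_n in B *)
    \sum_(y : n.-tuple 'I_d)
      \tr (b *m mxprod [seq psi (col j (invmx P)) | j <- y]) *
      \prod_(t < n) (row (tnth y t) P *m phi t) 0 (a t).
Proof.
move=> x.
have [b Hb] := exists_b psi_lin psi_inj x.
exists b => n; case: n => [//|n] _ a.
have psiF fs : psi (foldr (dual_mul D) eps fs) = mxprod (map psi fs).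
  by elim: fs => //= f fs IH; rewrite psi_mul IH.
have E (y : seq 'I_d) : [seq psi (col j (invmx P)) | j <- y] =
   map psi (map (fun j => col j (invmx P)) y) by rewrite -map_comp.
under [RHS]eq_bigr => y _ do rewrite E -psiF Hb mxE.
under [RHS]eq_bigr => y _ do under eq_bigr => k _ do rewrite coef_fold_map //.
under [RHS]eq_bigr => y _ do rewrite big_distrl /=.
rewrite [RHS]exchange_big; apply: eq_bigr => k _ /=.
under [RHS]eq_bigr => y _ do rewrite -mulrA big_distrl /=.
rewrite -big_distrr /=; congr (_ * _).
rewrite [RHS]exchange_big; apply: eq_bigr => s _ /=.
under [RHS]eq_bigr => y _ do rewrite -mulrA.
rewrite -big_distrr /=; congr (_ * _).
under [RHS]eq_bigr => y _ do rewrite -big_split /=.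
rewrite (sum_prod_tuple (fun t j => col j (invmx P) (tnth s t) 0 * (row j P *m phi t) 0 (a t))); apply: eq_bigr => t _.
rewrite -[in LHS](mul1mx (phi t)) -(mulVmx P_unit) -mulmxA mxE.
apply: eq_bigr => j _; rewrite -row_mul; congr (_ * _); rewrite [LHS]/= ?mxE //.
Qed.
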